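(* Let $m$ be odd and $0\le r\le (m-1)/2$. Let $\mathcal{G}=\mathcal{G}(m,r)$ be the set of column vectors $\varphi_{P,b}$, indexed by $x\in\mathbb{F}_2^m$, given by $$\varphi_{P,b}(x)=i^{\,wt(d_P)+2wt(b)}\,i^{\,xPx^\top+2bx^\top},$$ where $b$ ranges over $\mathbb{F}_2^m$ and the binary symmetric matrix $P$ ranges over the Delsarte–Goethals set $DG(m,r)$. Then $\mathcal{G}$ is a group of order $2^{(r+2)m}$ under pointwise multiplication.
   Context: Here $i=\sqrt{-1}$. $DG(m,r)$ is the Delsarte–Goethals set: a binary vector space (over $\mathbb{F}_2$) of $2^{(r+1)m}$ binary symmetric $m\times m$ matrices such that the sum (difference) of any two distinct matrices in it has rank at least $m-2r$ over $\mathbb{F}_2$. For a binary matrix $P$, $d_P$ denotes its main diagonal (a binary vector), and $wt$ denotes Hamming weight (number of 1s). The exponents $xPx^\top+2bx^\top$ and $wt(d_P)+2wt(b)$ are computed in the integers modulo 4, viewing the binary entries as the integers 0 and 1. *)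

(* Defs.v *)
From HB Require Import structures.
From mathcomp Require Import all_boot all_order all_algebra algC.
Set Implicit Arguments. Unset Strict Implicit. Unset Printing Implicit Defensive.
Import Order.TTheory GRing.Theory Num.Theory.
Local Open Scope ring_scope.

Definition bit (a : 'F_2) : nat := nat_of_ord a.

Definition wt m (v : 'rV['F_2]_m) : nat := (\sum_(j < m) bit (v ord0 j))%N.

Definition diagv m (P : 'M['F_2]_m) : 'rV['F_2]_m := \row_j P j j.

(* x P x^T computed over the integers (exponent of i, so taken mod 4). *)
Definition quadf m (P : 'M['F_2]_m) (x : 'rV['F_2]_m) : nat :=
  (\sum_(j < m) \sum_(k < m) bit (x ord0 j) * bit (P j k) * bit (x ord0 k))%N.

Definition linf m (b x : 'rV['F_2]_m) : nat :=
  (\sum_(j < m) bit (b ord0 j) * bit (x ord0 j))%N.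

Definition phi m (P : 'M['F_2]_m) (b : 'rV['F_2]_m) :
    {ffun 'rV['F_2]_m -> algC} :=
  [ffun x => 'i ^+ (wt (diagv P) + 2 * wt b)%N * 'i ^+ (quadf P x + 2 * linf b x)%N].

Definition is_DG (m r : nat) (DG : {set 'M['F_2]_m}) : Prop :=
  [/\ 0 \in DG,
      {in DG &, forall P Q, P + Q \in DG},
      {in DG, forall P, P^T = P},
      #|DG| = (2 ^ ((r + 1) * m))%N &
      {in DG &, forall P Q : 'M['F_2]_m, P != Q -> (m - 2 * r <= \rank (P - Q)%R)%N}].

Definition Gset m (DG : {set 'M['F_2]_m}) : seq {ffun 'rV['F_2]_m -> algC} :=
  undup [seq phi P b | P <- enum DG, b <- enum 'rV['F_2]_m].

Definition pmul m (f g : {ffun 'rV['F_2]_m -> algC}) : {ffun 'rV['F_2]_m -> algC} :=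
  [ffun x => f x * g x].
Definition pone m : {ffun 'rV['F_2]_m -> algC} := [ffun _ => 1].
Definition pinv m (f : {ffun 'rV['F_2]_m -> algC}) : {ffun 'rV['F_2]_m -> algC} :=
  [ffun x => (f x)^-1].

(* Main.v *)
Require Import Defs.
From HB Require Import structures.
From mathcomp Require Import all_boot all_order all_algebra algC.
From mathcomp Require Import ring.
Import Order.TTheory GRing.Theory Num.Theory.
Local Open Scope ring_scope.

Lemma m1n1 : (-1 : algC) != 1.
Proof. by rewrite -subr_eq0 -opprD oppr_eq0 -(natrD _ 1 1) pnatr_eq0. Qed.
Lemma iexp4 : 'i ^+ 4 = 1 :> algC.
Proof. by rewrite -[4%N]/(2*2)%N exprM sqrCi sqrrN expr1n. Qed.
Lemma iexp_mod n : 'i ^+ n = 'i ^+ (n %% 4) :> algC.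
Proof. by rewrite {1}(divn_eq n 4) exprD mulnC exprM iexp4 expr1n mul1r. Qed.
Lemma iexpZ n k : (n%:R : 'Z_4) = k%:R -> 'i ^+ n = 'i ^+ k :> algC.
Proof.
move=> e; have := @val_Zp_nat 4 isT n; rewrite e (@val_Zp_nat 4 isT) => e'.
by rewrite iexp_mod -e' -iexp_mod.
Qed.
Lemma ipow_ne1 d : (0 < d < 4)%N -> 'i ^+ d != 1 :> algC.
Proof.
have h1 : 'i != 1 :> algC.
  apply/eqP=> h; have : ('i ^+ 2 = 1 :> algC) by rewrite h expr1n.
  by rewrite sqrCi; apply/eqP; exact: m1n1.
case: d => [//|[|[|[|//]]]] _; first by rewrite expr1.
  by rewrite sqrCi m1n1.
apply/eqP=> h; have : ('i ^+ 4 = 'i :> algC) by rewrite exprS h mulr1.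
by rewrite iexp4 => /esym/eqP; rewrite (negbTE h1).
Qed.
Lemma ipow_small a b : (a < 4)%N -> (b < 4)%N -> 'i ^+ a = 'i ^+ b :> algC -> a = b.
Proof.
wlog ab : a b / (a <= b)%N.
  move=> H ha hb e; case: (leqP a b) => [ab|ba]; first exact: H.
  by apply/esym/H => //; apply: ltnW.
move=> ha hb e; apply/eqP; rewrite eqn_leq ab /= leqNgt; apply/negP=> ba.
have hd : (0 < b - a < 4)%N by rewrite subn_gt0 ba /=; apply: leq_ltn_trans (leq_subr _ _) hb.
have := @ipow_ne1 _ hd; rewrite -(inj_eq (mulfI (expf_neq0 a (neq0Ci algC)))).
by rewrite -exprD subnKC // mulr1 e eqxx.
Qed.
Lemma iexp_inj n k : 'i ^+ n = 'i ^+ k :> algC -> (n%:R : 'Z_4) = k%:R.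
Proof.
rewrite iexp_mod [in X in _ = X -> _]iexp_mod => /ipow_small e.
apply: val_inj; rewrite /= (@val_Zp_nat 4 isT) (@val_Zp_nat 4 isT).
by rewrite e // ltn_pmod.
Qed.
Definition z (a : 'F_2) : 'Z_4 := (bit a)%:R.
Lemma zD a b : z (a + b) = z a + z b + 2 * z a * z b.
Proof. by case: a => -[|[|//]] ?; case: b => -[|[|//]] ?; apply/eqP. Qed.
Lemma zM a b : z (a * b) = z a * z b.
Proof. by case: a => -[|[|//]] ?; case: b => -[|[|//]] ?; apply/eqP. Qed.
Lemma zz a : z a * z a = z a.
Proof. by case: a => -[|[|//]] ?; apply/eqP. Qed.
Lemma z0 : z 0 = 0. Proof. by apply/eqP. Qed.
Lemma z2inj a b : 2 * z a = 2 * z b -> a = b.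
Proof. by case: a => -[|[|//]] ?; case: b => -[|[|//]] ? /eqP //; move=> _; apply: val_inj. Qed.
Lemma zpair a b a' b' : z a + 2 * z b = z a' + 2 * z b' -> a = a' /\ b = b'.
Proof.
by case: a => -[|[|//]] ?; case: b => -[|[|//]] ?; case: a' => -[|[|//]] ?;
  case: b' => -[|[|//]] ? /eqP //; move=> _; split; apply: val_inj.
Qed.
Lemma two2 : 2 * 2 = 0 :> 'Z_4. Proof. by apply/eqP. Qed.
Lemma two2x (x : 'Z_4) : 2 * (2 * x) = 0. Proof. by rewrite mulrA two2 mul0r. Qed.

Lemma Zwt m (v : 'rV['F_2]_m) : (wt v)%:R = \sum_j z (v ord0 j) :> 'Z_4.
Proof. by rewrite /wt natr_sum. Qed.
Lemma Zquad m (P : 'M['F_2]_m) x : (quadf P x)%:R =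
  \sum_j \sum_k z (x ord0 j) * z (P j k) * z (x ord0 k) :> 'Z_4.
Proof. rewrite /quadf natr_sum; apply: eq_bigr => j _; rewrite natr_sum.
by apply: eq_bigr => k _; rewrite !natrM. Qed.
Lemma Zlin m (b x : 'rV['F_2]_m) : (linf b x)%:R = \sum_j z (b ord0 j) * z (x ord0 j) :> 'Z_4.
Proof. rewrite /linf natr_sum; by apply: eq_bigr => j _; rewrite !natrM. Qed.

Lemma sym_sum (R : comRingType) m (s : 'I_m -> 'I_m -> R) :
  (forall j k : 'I_m, s j k = s k j) ->
  \sum_(j < m) \sum_(k < m) s j k = \sum_(j < m) s j j + 2 * \sum_(j < m) \sum_(k < m) (if (j < k)%N then s j k else 0).
Proof.
move=> hs.
have e : forall j : 'I_m, \sum_(k < m) s j k = \sum_(k < m) (if (j < k)%N then s j k else 0)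
   + \sum_(k < m) (if (k < j)%N then s j k else 0) + \sum_(k < m) (if k == j then s j k else 0).
  move=> j; rewrite -!big_split /=; apply: eq_bigr => k _.
  case: (ltngtP j k) => [h|h|h]; rewrite /=. idtac.
  - by rewrite -val_eqE /= (gtn_eqF h) !addr0.
  - by rewrite -val_eqE /= (ltn_eqF h) add0r addr0.
  - by rewrite (val_inj h) eqxx !add0r.
rewrite (eq_bigr _ (fun j _ => e j)) !big_split /=.
have -> : \sum_(j < m) \sum_(k < m) (if k == j then s j k else 0) = \sum_(j < m) s j j.
  by apply: eq_bigr => j _; rewrite -big_mkcond big_pred1_eq.
have -> : \sum_(j < m) \sum_(k < m) (if (k < j)%N then s j k else 0) =
          \sum_(j < m) \sum_(k < m) (if (j < k)%N then s j k else 0).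
  rewrite exchange_big /=; apply: eq_bigr => j _; apply: eq_bigr => k _.
  by rewrite hs.
by rewrite mulr2n mulrDl mul1r addrC addrA.
Qed.

Lemma symE m (P : 'M['F_2]_m) : P^T = P -> forall j k, P k j = P j k.
Proof. by move=> h j k; rewrite -{1}h mxE. Qed.
Arguments symE {m P}.

Definition dprod m (P Q : 'M['F_2]_m) : 'rV['F_2]_m := \row_j (P j j * Q j j).
Arguments dprod {m}.

Lemma quadD m (P Q : 'M['F_2]_m) x : P^T = P -> Q^T = Q ->
  (quadf P x)%:R + (quadf Q x)%:R =
  (quadf (P + Q) x)%:R + 2 * (linf (dprod P Q) x)%:R :> 'Z_4.
Proof.
move=> sP sQ; rewrite !Zquad Zlin.
pose s j k := z (x ord0 j) * (z (P j k) * z (Q j k)) * z (x ord0 k).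
have -> : \sum_(j < m) \sum_(k < m) z (x ord0 j) * z ((P + Q) j k) * z (x ord0 k) =
  \sum_(j < m) \sum_(k < m) z (x ord0 j) * z (P j k) * z (x ord0 k) +
  \sum_(j < m) \sum_(k < m) z (x ord0 j) * z (Q j k) * z (x ord0 k) +
  2 * \sum_(j < m) \sum_(k < m) s j k.
  rewrite mulr_sumr -!big_split; apply: eq_bigr => j _ /=.
  rewrite mulr_sumr -!big_split; apply: eq_bigr => k _ /=.
  by rewrite mxE zD /s; ring.
rewrite (@sym_sum _ _ s); last first.
  by move=> j k; rewrite /s (symE sP j k) (symE sQ j k); ring.
rewrite mulrDr two2x addr0.
have -> : \sum_(j < m) s j j = \sum_(j < m) z (dprod P Q ord0 j) * z (x ord0 j).
  apply: eq_bigr => j _; rewrite /s mxE zM.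
  transitivity (z (P j j) * z (Q j j) * (z (x ord0 j) * z (x ord0 j))); first by ring.
  by rewrite zz.
set Y := \sum_(j < m) _ * _.
set A := \sum_(j < m) _; set B := \sum_(j < m) _.
have h4 : 2 * Y + 2 * Y = 0 by rewrite -(two2x Y); ring.
transitivity (A + B + (2 * Y + 2 * Y)); first by rewrite h4 addr0.
by ring.
Qed.

Lemma wtD {m} (P Q : 'M['F_2]_m) :
  (wt (diagv P))%:R + (wt (diagv Q))%:R =
  (wt (diagv (P + Q)))%:R + 2 * (wt (dprod P Q))%:R :> 'Z_4.
Proof.
rewrite !Zwt mulr_sumr -!big_split; apply: eq_bigr => j _ /=.
rewrite !mxE zD zM.
transitivity (z (P j j) + z (Q j j) + 2 * (2 * (z (P j j) * z (Q j j)))).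
  by rewrite two2x addr0.
by ring.
Qed.

Lemma wt2D m (u v : 'rV['F_2]_m) :
  2 * (wt (u + v))%:R = 2 * (wt u)%:R + 2 * (wt v)%:R :> 'Z_4.
Proof.
rewrite !Zwt !mulr_sumr -big_split; apply: eq_bigr => j _ /=.
rewrite !mxE zD.
transitivity (2 * z (u ord0 j) + 2 * z (v ord0 j) + 2 * (2 * (z (u ord0 j) * z (v ord0 j)))).
  by ring.
by rewrite two2x addr0.
Qed.

Lemma lin2D m (u v x : 'rV['F_2]_m) :
  2 * (linf (u + v) x)%:R = 2 * (linf u x)%:R + 2 * (linf v x)%:R :> 'Z_4.
Proof.
rewrite !Zlin !mulr_sumr -big_split; apply: eq_bigr => j _ /=.
rewrite !mxE zD.
transitivity (2 * z (u ord0 j) * z (x ord0 j) + 2 * z (v ord0 j) * z (x ord0 j)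
   + 2 * (2 * (z (u ord0 j) * z (v ord0 j) * z (x ord0 j)))).
  by ring.
by rewrite two2x addr0; ring.
Qed.

Lemma natrD2 a b : ((a + 2 * b)%N)%:R = a%:R + 2 * b%:R :> 'Z_4.
Proof. by rewrite natrD natrM. Qed.

Lemma phiM m (P Q : 'M['F_2]_m) b c : P^T = P -> Q^T = Q ->
  pmul (phi P b) (phi Q c) = phi (P + Q) (b + c + dprod P Q).
Proof.
move=> sP sQ; apply/ffunP => x; rewrite !ffunE -!exprD; apply: iexpZ.
rewrite natrD !(natrD _ (_ + 2 * _)%N (_ + 2 * _)%N) !natrD2 lin2D wt2D lin2D wt2D.
have hw := wtD P Q; have hq := @quadD _ P Q x sP sQ.
have hw' : (wt (diagv (P + Q)))%:R = (wt (diagv P))%:R + (wt (diagv Q))%:R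
   - 2 * (wt (dprod P Q))%:R :> 'Z_4 by rewrite hw addrK.
have hq' : (quadf (P + Q) x)%:R = (quadf P x)%:R + (quadf Q x)%:R
   - 2 * (linf (dprod P Q) x)%:R :> 'Z_4 by rewrite hq addrK.
rewrite hw' hq'; ring.
Qed.
Set Implicit Arguments. Unset Strict Implicit.

Lemma quad0 m (P : 'M['F_2]_m) : quadf P 0 = 0%N.
Proof. by rewrite /quadf big1 // => j _; rewrite big1 // => k _; rewrite !mxE muln0. Qed.
Lemma lin0 m (b : 'rV['F_2]_m) : linf b 0 = 0%N.
Proof. by rewrite /linf big1 // => j _; rewrite !mxE muln0. Qed.

Definition Bf m (P : 'M['F_2]_m) (d d' : 'I_m -> 'Z_4) :=
  \sum_(i < m) \sum_(k < m) d i * z (P i k) * d' k.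
Definition dl m (j : 'I_m) : 'I_m -> 'Z_4 := fun i => (i == j)%:R.

Lemma BfDl m P (d1 d2 d' : 'I_m -> 'Z_4) :
  Bf P (fun i => d1 i + d2 i) d' = Bf P d1 d' + Bf P d2 d'.
Proof.
rewrite /Bf -big_split; apply: eq_bigr => i _; rewrite -big_split.
by apply: eq_bigr => k _ /=; ring.
Qed.
Lemma BfDr m P (d1 d2 d' : 'I_m -> 'Z_4) :
  Bf P d' (fun i => d1 i + d2 i) = Bf P d' d1 + Bf P d' d2.
Proof.
rewrite /Bf -big_split; apply: eq_bigr => i _; rewrite -big_split.
by apply: eq_bigr => k _ /=; ring.
Qed.
Lemma sum_dl m (j : 'I_m) (f : 'I_m -> 'Z_4) : \sum_(i < m) dl j i * f i = f j.
Proof.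
rewrite (bigD1 j) //= /dl eqxx mul1r big1 ?addr0 // => i /negbTE ->.
by rewrite mul0r.
Qed.
Lemma sum_dr m (j : 'I_m) (f : 'I_m -> 'Z_4) : \sum_(i < m) f i * dl j i = f j.
Proof. by rewrite -(sum_dl j f); apply: eq_bigr => i _; rewrite mulrC. Qed.
Lemma Bf_dl m P (j k : 'I_m) : Bf P (dl j) (dl k) = z (P j k).
Proof.
rewrite /Bf (eq_bigr (fun i => dl j i * z (P i k))); first by rewrite sum_dl.
by move=> i _; rewrite -(sum_dr k (fun l => dl j i * z (P i l))).
Qed.
Lemma Zquad_vec m (P : 'M['F_2]_m) (x : 'rV['F_2]_m) (d : 'I_m -> 'Z_4) :
  (forall i, z (x ord0 i) = d i) -> (quadf P x)%:R = Bf P d d.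
Proof.
move=> h; rewrite Zquad /Bf; apply: eq_bigr => i _; apply: eq_bigr => k _.
by rewrite !h.
Qed.
Lemma Zlin_vec m (b x : 'rV['F_2]_m) (d : 'I_m -> 'Z_4) :
  (forall i, z (x ord0 i) = d i) -> (linf b x)%:R = \sum_(i < m) z (b ord0 i) * d i.
Proof. by move=> h; rewrite Zlin; apply: eq_bigr => i _; rewrite h. Qed.

Lemma phi_inj m (P Q : 'M['F_2]_m) b c : P^T = P -> Q^T = Q ->
  phi P b = phi Q c -> P = Q /\ b = c.
Proof.
move=> sP sQ e.
have hx : forall x, ((quadf P x + 2 * linf b x)%N%:R : 'Z_4) =
                    (quadf Q x + 2 * linf c x)%N%:R.
  move=> x; apply: iexp_inj.
  have e0 : phi P b 0 = phi Q c 0 by rewrite e.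
  have ex : phi P b x = phi Q c x by rewrite e.
  move: e0 ex => /=; rewrite !ffunE !quad0 !lin0 !expr0 !mulr1 => ->.
  by move/(mulfI (expf_neq0 _ (neq0Ci algC))).
have hdiag : forall j, P j j = Q j j /\ b ord0 j = c ord0 j.
  move=> j; have := hx (\row_i ((i == j)%:R : 'F_2)).
  have hz : forall i, z ((\row_i ((i == j)%:R : 'F_2)) ord0 i) = dl j i.
    by move=> i; rewrite mxE /dl; case: (i == j); apply/eqP.
  rewrite !natrD2 !(Zquad_vec _ hz) !(Zlin_vec _ hz) !Bf_dl !sum_dr.
  by move/zpair.
have hb : b = c by apply/rowP => j; case: (hdiag j).
split => //; apply/matrixP => j k.
case: (eqVneq j k) => [<-|njk]; first by case: (hdiag j).
have := hx (\row_i (((i == j) || (i == k))%:R : 'F_2)).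
have hz : forall i, z ((\row_i (((i == j) || (i == k))%:R : 'F_2)) ord0 i)
                     = dl j i + dl k i.
  move=> i; rewrite mxE /dl; case: (eqVneq i j) => [->|_].
    by rewrite (negbTE njk) /=; apply/eqP.
  by case: (i == k); apply/eqP.
rewrite !natrD2 !(Zquad_vec _ hz) !(Zlin_vec _ hz).
rewrite !BfDl !BfDr !Bf_dl.
under eq_bigr => i _ do rewrite mulrDr.
under [in X in _ = X]eq_bigr => i _ do rewrite mulrDr.
rewrite !big_split /= !sum_dr hb.
rewrite (symE sP j k) (symE sQ j k).
case: (hdiag j) => -> _; case: (hdiag k) => -> _.
move=> H; apply: z2inj.
match type of H with ?L = ?R =>
  apply/eqP; rewrite -subr_eq0; apply/eqP;
  transitivity (L - R); [ring | by rewrite H subrr] end.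
Qed.

Lemma memG m (DG : {set 'M['F_2]_m}) f :
  f \in Gset DG -> exists P b, P \in DG /\ f = phi P b.
Proof.
rewrite /Gset mem_undup => /allpairsP [[P b] [/= hP _ ->]].
by exists P, b; rewrite mem_enum in hP.
Qed.
Lemma phiG m (DG : {set 'M['F_2]_m}) P b : P \in DG -> phi P b \in Gset DG.
Proof.
by move=> hP; rewrite /Gset mem_undup; apply/allpairsP; exists (P, b); rewrite /= !mem_enum.
Qed.

Lemma pmulE m (f g : {ffun 'rV['F_2]_m -> algC}) x : pmul f g x = f x * g x.
Proof. by rewrite ffunE. Qed.
Lemma pinvE m (f : {ffun 'rV['F_2]_m -> algC}) x : pinv f x = (f x)^-1.
Proof. by rewrite ffunE. Qed.

Theorem propositionA1 (m r : nat) (DG : {set 'M['F_2]_m}) :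
  odd m -> (r <= (m - 1) %/ 2)%N -> is_DG r DG ->
  [/\ pone m \in Gset DG,
      {in Gset DG &, forall f g : {ffun 'rV['F_2]_m -> algC}, pmul f g \in Gset DG},
      {in Gset DG, forall f : {ffun 'rV['F_2]_m -> algC}, (forall x, f x != 0) /\ pinv f \in Gset DG} &
      size (Gset DG) = (2 ^ ((r + 2) * m))%N].
Proof.
move=> _ _ [DG0 DGadd DGsym DGcard _].
have hmul : {in Gset DG &, forall f g : {ffun 'rV['F_2]_m -> algC}, pmul f g \in Gset DG}.
  move=> f g /memG [P [b [hP ->]]] /memG [Q [c [hQ ->]]].
  by rewrite phiM ?DGsym //; apply: phiG; apply: DGadd.
split => //.
- have -> : pone m = phi 0 0.
    apply/ffunP => x; rewrite !ffunE.
    have w0 : forall v : 'rV['F_2]_m, (forall j, v ord0 j = 0) -> wt v = 0%N.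
      by move=> v hv; rewrite /wt big1 // => j _; rewrite hv.
    rewrite (w0 (diagv 0)); last by move=> j; rewrite !mxE.
    rewrite (w0 0); last by move=> j; rewrite !mxE.
    rewrite /quadf /linf !big1 ?expr0 ?mulr1 // => j _.
    + by rewrite mxE mul0n.
    + by rewrite big1 // => k _; rewrite !mxE muln0 mul0n.
  exact: phiG DG0.
- move=> f /memG [P [b [hP ->]]].
  have hn : forall x, exists n, phi P b x = 'i ^+ n.
    by move=> x; rewrite ffunE -exprD; eexists.
  split.
    by move=> x; rewrite ffunE mulf_neq0 // expf_neq0 // neq0Ci.
  have -> : pinv (phi P b) = pmul (phi P b) (pmul (phi P b) (phi P b)).
    apply/ffunP => x; rewrite pinvE !pmulE; have [n ->] := hn x.
    apply: (mulfI (expf_neq0 n (neq0Ci algC))); rewrite mulfV ?expf_neq0 ?neq0Ci //.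
    rewrite -!exprD.
    have -> : (n + (n + (n + n)) = 4 * n)%N by rewrite !mulSn mul0n addn0.
    by rewrite exprM iexp4 expr1n.
  by apply: (hmul); [apply: phiG | apply: (hmul); apply: phiG].
- rewrite /Gset undup_id ?size_allpairs -?cardE.
    rewrite card_mx card_Fp // DGcard mul1n -expnD; congr (2 ^ _)%N.
    by rewrite -mulSnr addn1 addn2.
  apply: allpairs_uniq; rewrite ?enum_uniq //.
  move=> [P b] [Q c] /allpairsP [[P1 b1] [h1 _ [-> ->]]] /allpairsP [[Q1 c1] [h2 _ [-> ->]]] /=.
  rewrite !mem_enum in h1 h2.
  by case/phi_inj; rewrite ?DGsym // => -> ->.
Qed.
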